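(* Let $W$ be a real $N\times N$ matrix with singular value decomposition $W=U\Sigma V^\top$ and singular values $\sigma_1\ge\cdots\ge\sigma_N\ge0$, let $1\le n<N$, and let $V_n$ be the $N\times n$ matrix of the first $n$ right singular vectors of $W$ (first $n$ columns of $V$). Let $g:\mathbb{R}^N\times\mathbb{R}^N\to\mathbb{R}^N$ be continuously differentiable, with Jacobian matrices $J_x(x,y)=\big(\partial g_i/\partial x_j\big)_{i,j}$ and $J_y(x,y)=\big(\partial g_i/\partial y_j\big)_{i,j}$. Consider the complete dynamics $\dot x=g(x,Wx)$ and the reduced dynamics $\dot X=Mg(M^+X,WM^+X)$ with $M=V_n^\top$, and define the alignment error at $x\in\mathbb{R}^N$ by \[\mathcal{E}(x)=\frac{1}{\sqrt n}\big\|Mg(x,Wx)-Mg(M^+Mx,WM^+Mx)\big\|.\] Then for every $x\in\mathbb{R}^N$ there is a point $x'$ on the segment between $x$ and $V_nV_n^\top x$ such that, with $y'=Wx'$, \[\mathcal{E}(x)\le\frac{1}{\sqrt n}\Big[\big\|V_n^\top J_x(x',y')(I-V_nV_n^\top)x\big\|+\sigma_{n+1}\big\|V_n^\top J_y(x',y')\big\|_2\,\|x\|\Big].\] Moreover, for any $x\neq0$, \[\frac{\mathcal{E}(x)}{\|x\|}\le\frac{1}{\sqrt n}\Big[\alpha(x',y')+\sigma_{n+1}\beta(x',y')\Big],\] where $\alpha(x',y')=\sigma_1(J_x(x',y'))$ and $\beta(x',y')=\sigma_1(J_y(x',y'))$ are the largest singular values of the Jacobians.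
   Context: $\|\cdot\|$ is the Euclidean vector norm, $\|\cdot\|_2$ the spectral matrix norm, $M^+$ the Moore–Penrose pseudoinverse of $M$. *)

(* Defs.v *)
From HB Require Import structures.
From mathcomp Require Import all_boot all_order all_algebra.
From mathcomp Require Import all_classical all_reals all_analysis.
Set Implicit Arguments. Unset Strict Implicit. Unset Printing Implicit Defensive.
Import Order.TTheory GRing.Theory Num.Theory.
Import numFieldNormedType.Exports.
Local Open Scope classical_set_scope.
Local Open Scope ring_scope.

Section Defs.
Variable R : realType.

Definition enorm (k : nat) (v : 'cV[R]_k) : R := Num.sqrt (\sum_i (v i 0) ^+ 2).

Definition specnorm (m k : nat) (A : 'M[R]_(m, k)) : R :=
  sup [set enorm (A *m v) | v in [set v : 'cV[R]_k | enorm v <= 1]].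

Definition sigma1 (m k : nat) (A : 'M[R]_(m, k)) : R :=
  Num.sqrt (sup [set l : R | eigenvalue (A^T *m A) l]).

Definition penrose (m k : nat) (M : 'M[R]_(m, k)) (P : 'M[R]_(k, m)) : Prop :=
  [/\ M *m P *m M = M, P *m M *m P = P,
      (M *m P)^T = M *m P & (P *m M)^T = P *m M].

Definition pinv (m k : nat) (M : 'M[R]_(m, k)) : 'M[R]_(k, m) :=
  get [set P | penrose M P].

Definition firstcols (n N : nat) (h : (n <= N)%N) (V : 'M[R]_N) : 'M[R]_(N, n) :=
  \matrix_(i, j) V i (widen_ord h j).

Definition Jx (N : nat) (g : 'cV[R]_N -> 'cV[R]_N -> 'cV[R]_N) (x y : 'cV[R]_N)
  : 'M[R]_N := \matrix_(i, j) ('D_(delta_mx j 0) (fun z => g z y) x) i 0.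
Definition Jy (N : nat) (g : 'cV[R]_N -> 'cV[R]_N -> 'cV[R]_N) (x y : 'cV[R]_N)
  : 'M[R]_N := \matrix_(i, j) ('D_(delta_mx j 0) (fun z => g x z) y) i 0.

Definition C1 (N : nat) (g : 'cV[R]_N -> 'cV[R]_N -> 'cV[R]_N) : Prop :=
  (forall p : 'cV[R]_N * 'cV[R]_N,
      differentiable (fun q : 'cV[R]_N * 'cV[R]_N => g q.1 q.2) p)
  /\ continuous (fun p : 'cV[R]_N * 'cV[R]_N => Jx g p.1 p.2)
  /\ continuous (fun p : 'cV[R]_N * 'cV[R]_N => Jy g p.1 p.2).

(** SVD W = U diag(s) V^T with U, V orthogonal, s_1 >= ... >= s_N >= 0
    (s indexed from 0). *)
Definition is_svd (N : nat) (W U V : 'M[R]_N) (s : 'I_N -> R) : Prop :=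
  [/\ U^T *m U = 1%:M, V^T *m V = 1%:M,
      W = U *m diag_mx (\row_i s i) *m V^T,
      forall i, 0 <= s i &
      forall i j : 'I_N, (i <= j)%N -> s j <= s i].

Definition align_err (n N : nat) (g : 'cV[R]_N -> 'cV[R]_N -> 'cV[R]_N)
  (W : 'M[R]_N) (M : 'M[R]_(n, N)) (x : 'cV[R]_N) : R :=
  let z := pinv M *m M *m x in
  (Num.sqrt n%:R)^-1 * enorm (M *m g x (W *m x) - M *m g z (W *m z)).

End Defs.

(* Main.v *)
Require Import Defs.
From HB Require Import structures.
From mathcomp Require Import all_boot all_order all_algebra.
From mathcomp Require Import all_classical all_reals all_analysis.
From mathcomp Require Import ring lra.
Import Order.TTheory GRing.Theory Num.Theory.
Import numFieldNormedType.Exports.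
Local Open Scope ring_scope.

Module Helpers.
Set Implicit Arguments. Unset Strict Implicit. Unset Printing Implicit Defensive.
Section LA.
Variable R : realType.

Lemma CS k (f h : 'I_k -> R) :
  (\sum_i f i * h i) ^+ 2 <= (\sum_i f i ^+ 2) * (\sum_i h i ^+ 2).
Proof.
set A := \sum_i f i ^+ 2; set B := \sum_i f i * h i; set C := \sum_i h i ^+ 2.
have C0 : 0 <= C by apply: sumr_ge0 => i _; exact: sqr_ge0.
have A0 : 0 <= A by apply: sumr_ge0 => i _; exact: sqr_ge0.
have key : 0 <= C * (A * C - B ^+ 2).
  have -> : C * (A * C - B ^+ 2) = \sum_i (C * f i - B * h i) ^+ 2.
    rewrite (eq_bigr (fun i => C^+2 * f i ^+ 2 + (- (2 * C * B)) * (f i * h i) + B ^+ 2 * h i ^+ 2)); last first.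
      by move=> i _; ring.
    rewrite !big_split /= -!mulr_sumr -/A -/B -/C; ring.
  by apply: sumr_ge0 => i _; exact: sqr_ge0.
have [Cp|] := ltrP 0 C.
  by rewrite -subr_ge0; rewrite pmulr_rge0 // in key.
move=> Cle; have C00 : C = 0 by apply/le_anti; rewrite Cle C0.
have h0 : forall i, h i = 0.
  move=> i; apply/eqP; rewrite -sqrf_eq0; apply/eqP/le_anti; rewrite sqr_ge0 andbT.
  rewrite -C00 /C (bigD1 i) //= lerDl; apply: sumr_ge0 => j _; exact: sqr_ge0.
rewrite /B big1 ?expr0n ?mulr0n //=; last by move=> i _; rewrite h0 mulr0.
by rewrite mulr_ge0.
Qed.

Lemma sq_le_le (a b : R) : 0 <= b -> a ^+ 2 <= b ^+ 2 -> a <= b.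
Proof.
move=> b0 h; apply: le_trans (ler_norm a) _.
by rewrite -sqrtr_sqr -[b](ger0_norm b0) -sqrtr_sqr ler_wsqrtr.
Qed.

Lemma dotE k (u w : 'cV[R]_k) : (u^T *m w) 0 0 = \sum_i u i 0 * w i 0.
Proof. by rewrite !mxE; apply: eq_bigr => i _; rewrite mxE. Qed.

Lemma enorm_ge0 k (v : 'cV[R]_k) : 0 <= enorm v.
Proof. exact: sqrtr_ge0. Qed.

Lemma enorm_sq k (v : 'cV[R]_k) : enorm v ^+ 2 = \sum_i v i 0 ^+ 2.
Proof. by rewrite sqr_sqrtr //; apply: sumr_ge0 => i _; exact: sqr_ge0. Qed.

Lemma enorm_sqE k (v : 'cV[R]_k) : enorm v ^+ 2 = (v^T *m v) 0 0.
Proof. by rewrite enorm_sq dotE; apply: eq_bigr => i _; rewrite expr2. Qed.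

Lemma enorm_eqE k l (u : 'cV[R]_k) (v : 'cV[R]_l) : enorm u ^+ 2 = enorm v ^+ 2 -> enorm u = enorm v.
Proof.
move=> h; apply/le_anti/andP; split; apply: sq_le_le; rewrite ?enorm_ge0 ?h //.
Qed.

Lemma dot_sq k (u w : 'cV[R]_k) : ((u^T *m w) 0 0) ^+ 2 <= enorm u ^+ 2 * enorm w ^+ 2.
Proof. by rewrite dotE !enorm_sq; exact: CS. Qed.

Lemma dot_le k (u w : 'cV[R]_k) : (u^T *m w) 0 0 <= enorm u * enorm w.
Proof.
apply: sq_le_le; first by rewrite mulr_ge0 ?enorm_ge0.
by rewrite exprMn dot_sq.
Qed.

Lemma enormD k (u w : 'cV[R]_k) : enorm (u + w) <= enorm u + enorm w.
Proof.
apply: sq_le_le; first by rewrite addr_ge0 ?enorm_ge0.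
have -> : enorm (u + w) ^+ 2 = enorm u ^+ 2 + 2 * (u^T *m w) 0 0 + enorm w ^+ 2.
  rewrite !enorm_sq dotE mulr_sumr -!big_split /=; apply: eq_bigr => i _.
  rewrite mxE; ring.
rewrite sqrrD mulr2n; have := dot_le u w; lra.
Qed.

Lemma enormZ k (a : R) (v : 'cV[R]_k) : enorm (a *: v) = `|a| * enorm v.
Proof.
rewrite /enorm -sqrtr_sqr -sqrtrM ?sqr_ge0 // mulr_sumr.
by congr Num.sqrt; apply: eq_bigr => i _; rewrite mxE exprMn.
Qed.


Lemma enorm0 k : enorm (0 : 'cV[R]_k) = 0.
Proof. by rewrite /enorm big1 ?sqrtr0 // => i _; rewrite mxE expr0n. Qed.

Lemma enorm_eq0 k (v : 'cV[R]_k) : enorm v = 0 -> v = 0.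
Proof.
move=> h; have : enorm v ^+ 2 = 0 by rewrite h expr0n.
rewrite enorm_sq => hs.
apply/matrixP => i j; rewrite ord1 mxE; apply/eqP; rewrite -sqrf_eq0.
apply/eqP/le_anti; rewrite sqr_ge0 andbT -hs (bigD1 i) //= lerDl.
by apply: sumr_ge0 => l _; exact: sqr_ge0.
Qed.

Lemma enorm_gt0 k (v : 'cV[R]_k) : v != 0 -> 0 < enorm v.
Proof.
move=> nz; rewrite lt_neqAle enorm_ge0 andbT; apply/eqP => h.
by move: nz; rewrite (enorm_eq0 (esym h)) eqxx.
Qed.

Lemma enorm_orth k (U : 'M[R]_k) (v : 'cV[R]_k) :
  U^T *m U = 1%:M -> enorm (U *m v) = enorm v.
Proof.
move=> hU; apply: enorm_eqE; rewrite !enorm_sqE trmx_mul -mulmxA (mulmxA U^T).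
by rewrite hU mul1mx.
Qed.

Definition frob m k (A : 'M[R]_(m, k)) := \sum_i \sum_j A i j ^+ 2.

Lemma frob_ge0 m k (A : 'M[R]_(m, k)) : 0 <= frob A.
Proof. by apply: sumr_ge0 => i _; apply: sumr_ge0 => j _; exact: sqr_ge0. Qed.

Lemma frob_bound m k (A : 'M[R]_(m, k)) v :
  enorm (A *m v) ^+ 2 <= frob A * enorm v ^+ 2.
Proof.
rewrite !enorm_sq /frob mulr_suml; apply: ler_sum => i _.
rewrite mxE; exact: CS.
Qed.

Lemma frob_bound1 m k (A : 'M[R]_(m, k)) v :
  enorm (A *m v) <= Num.sqrt (frob A) * enorm v.
Proof.
apply: sq_le_le; first by rewrite mulr_ge0 ?sqrtr_ge0 ?enorm_ge0.
by rewrite exprMn (sqr_sqrtr (frob_ge0 A)) frob_bound.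
Qed.

Definition Sset m k (A : 'M[R]_(m, k)) :=
  [set enorm (A *m v) | v in [set v : 'cV[R]_k | enorm v <= 1]]%classic.

Lemma Sset_has_sup m k (A : 'M[R]_(m, k)) : has_sup (Sset A).
Proof.
split.
  by exists 0, 0; rewrite /= ?enorm0 ?ler01 // mulmx0 enorm0.
exists (Num.sqrt (frob A)) => _ [v /= hv <-].
apply: le_trans (frob_bound1 A v) _.
by rewrite ler_piMr ?sqrtr_ge0.
Qed.

Lemma specnorm_ge0 m k (A : 'M[R]_(m, k)) : 0 <= specnorm A.
Proof.
have := sup_upper_bound (Sset_has_sup A); apply.
by exists 0; rewrite /= ?enorm0 ?ler01 // mulmx0 enorm0.
Qed.

Lemma specnorm_bound m k (A : 'M[R]_(m, k)) v :
  enorm (A *m v) <= specnorm A * enorm v.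
Proof.
have [->|nz] := eqVneq v 0; first by rewrite mulmx0 !enorm0 mulr0.
have vp := enorm_gt0 nz.
have : enorm (A *m ((enorm v)^-1 *: v)) <= specnorm A.
  apply: (sup_upper_bound (Sset_has_sup A)); exists ((enorm v)^-1 *: v) => //=.
  by rewrite enormZ ger0_norm ?invr_ge0 ?enorm_ge0 // mulVf ?gt_eqF.
rewrite -scalemxAr enormZ ger0_norm ?invr_ge0 ?enorm_ge0 //.
by rewrite mulrC -ler_pdivlMr ?invr_gt0 // invrK.
Qed.

Lemma specnorm_le m k (A : 'M[R]_(m, k)) c : 0 <= c ->
  (forall v, enorm (A *m v) <= c * enorm v) -> specnorm A <= c.
Proof.
move=> c0 h; apply: ge_sup.
  by exists 0, 0; rewrite /= ?enorm0 ?ler01 // mulmx0 enorm0.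
move=> _ [v /= hv <-]; apply: le_trans (h v) _.
by rewrite ler_piMr.
Qed.


Lemma quad_disc (a b c : R) : 0 <= a -> 0 <= c ->
  (forall t, 0 <= a + 2 * t * b + t ^+ 2 * c) -> b ^+ 2 <= a * c.
Proof.
move=> a0 c0 h.
have [cp|] := ltrP 0 c.
  have := h (- b / c); set t := - b / c => ht.
  have e : a + 2 * t * b + t ^+ 2 * c = a - b ^+ 2 / c.
    by rewrite /t; field; rewrite gt_eqF.
  rewrite e subr_ge0 ler_pdivrMr // in ht.
move=> cle; have c00 : c = 0 by apply/le_anti; rewrite cle c0.
subst c; rewrite mulr0.
have [b0|bn] := eqVneq b 0; first by rewrite b0 expr0n.
have := h (- (a + 1) / (2 * b)).
have -> : a + 2 * (- (a + 1) / (2 * b)) * b + (- (a + 1) / (2 * b)) ^+ 2 * 0 = -1.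
  by field.
by rewrite ler0N1.
Qed.

Lemma psd_cs k (C : 'M[R]_k) (w v : 'cV[R]_k) : C^T = C ->
  (forall x : 'cV[R]_k, 0 <= (x^T *m C *m x) 0 0) ->
  ((w^T *m C *m v) 0 0) ^+ 2 <= (w^T *m C *m w) 0 0 * (v^T *m C *m v) 0 0.
Proof.
move=> sym psd; apply: quad_disc => // t.
have := psd (w + t *: v).
have symm : (v^T *m C *m w) 0 0 = (w^T *m C *m v) 0 0.
  have tr11 : forall M : 'M[R]_1, M 0 0 = M^T 0 0 by move=> M; rewrite mxE.
  by rewrite tr11 !trmx_mul trmxK sym mulmxA.
rewrite (raddfD (@trmx R k 1)) /= !mulmxDl !mulmxDr.
have -> : (t *: v)^T = t *: v^T by apply/matrixP => i j; rewrite !mxE.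
rewrite -!scalemxAl -!scalemxAr scalerA.
move: symm; set p := w^T *m C *m w; set q := w^T *m C *m v; set r := v^T *m C *m w.
set u := v^T *m C *m v; rewrite !mxE => ->.
move=> H; apply: le_trans H _; rewrite le_eqVlt; apply/orP; left; apply/eqP; ring.
Qed.


Lemma mxBE m n (M N : 'M[R]_(m, n)) i j : (M - N) i j = M i j - N i j.
Proof. by rewrite !mxE. Qed.
Lemma mxDE m n (M N : 'M[R]_(m, n)) i j : (M + N) i j = M i j + N i j.
Proof. by rewrite !mxE. Qed.
Lemma mxZE m n (a : R) (M : 'M[R]_(m, n)) i j : (a *: M) i j = a * M i j.
Proof. by rewrite !mxE. Qed.

Lemma sq_mono (a b : R) : 0 <= a -> a <= b -> a ^+ 2 <= b ^+ 2.
Proof. by move=> a0 ab; rewrite !expr2 ler_pM. Qed.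

Lemma AvE m k (A : 'M[R]_(m, k)) v :
  enorm (A *m v) ^+ 2 = (v^T *m (A^T *m A) *m v) 0 0.
Proof. by rewrite enorm_sqE trmx_mul !mulmxA. Qed.

Lemma sigma1_specnorm m k (A : 'M[R]_(m, k.+1)) : sigma1 A = specnorm A.
Proof.
set s0 := specnorm A; set c := s0 ^+ 2; set B := A^T *m A.
have s00 : 0 <= s0 by exact: specnorm_ge0.
have c0 : 0 <= c by rewrite /c sqr_ge0.
set C := c%:M - B.
have qE : forall v : 'cV[R]_k.+1, (v^T *m C *m v) 0 0 = c * enorm v ^+ 2 - enorm (A *m v) ^+ 2.
  move=> v; rewrite AvE enorm_sqE mulmxBr mulmxBl mxBE mul_mx_scalar -scalemxAl mxZE //.
have Avle : forall v : 'cV[R]_k.+1, enorm (A *m v) ^+ 2 <= c * enorm v ^+ 2.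
  move=> v; rewrite /c -exprMn; apply: sq_mono; first exact: enorm_ge0.
  exact: specnorm_bound.
have psd : forall v : 'cV[R]_k.+1, 0 <= (v^T *m C *m v) 0 0.
  by move=> v; rewrite qE subr_ge0.
have Csym : C^T = C.
  by rewrite /C (raddfB (@trmx R _ _)) /= tr_scalar_mx /B trmx_mul trmxK.
have eig_ub : forall l, eigenvalue B l -> l <= c.
  move=> l /eigenvalueP [v hv nz].
  have e1 : (v *m B *m v^T) 0 0 = l * enorm v^T ^+ 2.
    by rewrite hv -scalemxAl mxZE enorm_sqE trmxK.
  have e2 : (v *m B *m v^T) 0 0 = enorm (A *m v^T) ^+ 2 by rewrite AvE trmxK.
  have pos : 0 < enorm v^T ^+ 2.
    by rewrite exprn_gt0 // enorm_gt0 // trmx_eq0.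
  rewrite -(ler_pM2r pos) -e1 e2; exact: Avle.
have eig_c : eigenvalue B c.
  case: (boolP (eigenvalue B c)) => // neig; exfalso.
  have detC : \det C != 0.
    apply/negP => /det0P [u nz hu]; move/negP: neig; apply; apply/eigenvalueP.
    exists u => //; move: hu; rewrite /C mulmxBr mul_mx_scalar => /eqP.
    by rewrite subr_eq0 => /eqP <-.
  have Cu : C \in unitmx by rewrite unitmxE unitfE.
  set D := invmx C; set F := frob D.
  have F0 : 0 <= F := frob_ge0 D.
  have key : forall v : 'cV[R]_k.+1, enorm v ^+ 2 <= F * (c * (v^T *m C *m v) 0 0).
    move=> v; set w := C *m v.
    have vE : v = D *m w by rewrite /w /D mulKmx.
    have h1 : enorm v ^+ 2 <= F * enorm w ^+ 2.
      by rewrite [in X in X <= _]vE; exact: frob_bound.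
    have h2 : enorm w ^+ 2 = (w^T *m C *m v) 0 0 by rewrite enorm_sqE -mulmxA.
    have h3 := psd_cs w v Csym psd.
    rewrite -h2 in h3.
    have h4 : (w^T *m C *m w) 0 0 <= c * enorm w ^+ 2.
      by rewrite qE lerBlDr lerDl sqr_ge0.
    have Q0 := psd v.
    have h5 : enorm w ^+ 2 <= c * (v^T *m C *m v) 0 0.
      have [wp|wn] := ltrP 0 (enorm w ^+ 2).
        rewrite -(ler_pM2l wp); apply: le_trans (le_trans h3 (ler_wpM2r Q0 h4)) _.
        by rewrite le_eqVlt; apply/orP; left; apply/eqP; ring.
      by apply: le_trans wn _; rewrite mulr_ge0.
    exact: le_trans h1 (ler_wpM2l F0 h5).
  have [s0p|s0n] := ltrP 0 s0; last first.
    have cz : c = 0 by rewrite /c (_ : s0 = 0) ?expr0n //; apply/le_anti; rewrite s0n s00.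
    have := key (const_mx 1); rewrite cz mul0r mulr0 => hk.
    have : enorm (const_mx 1 : 'cV[R]_k.+1) = 0.
      by apply/le_anti; rewrite enorm_ge0 andbT; apply: sq_le_le => //; rewrite expr0n.
    move/enorm_eq0/matrixP => /(_ 0 0); rewrite !mxE => /eqP; rewrite oner_eq0 //.
  set K := F * c * c.
  have K0 : 0 <= K by rewrite !mulr_ge0.
  have K1 : 0 < 8 * (K + 1) by lra.
  set d := (8 * (K + 1))^-1.
  have d0 : 0 < d by rewrite invr_gt0.
  have hd : d * (8 * (K + 1)) = 1 by rewrite mulVf // gt_eqF.
  have dK : 0 <= d * K by rewrite mulr_ge0 // ltW.
  have d8 : d <= 1 / 8 by lra.
  have key2 : 2 * K * d < 1 / 4 by lra.
  set eps := s0 * d.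
  have eps0 : 0 < eps by rewrite mulr_gt0.
  have [_ [v vle <-] hv] := sup_adherent eps0 (Sset_has_sup A).
  have hv' : s0 - eps < enorm (A *m v) := hv.
  move: vle; rewrite /= => vle.
  set a := enorm (A *m v) in hv'; set e := enorm v in vle.
  have hb : a <= s0 * e := specnorm_bound A v.
  have a0 : 0 <= a := enorm_ge0 _.
  have e0 : 0 <= e := enorm_ge0 _.
  have he : 1 - d < e.
    rewrite -(ltr_pM2l s0p); apply: lt_le_trans hb.
    by rewrite mulrBr mulr1.
  have he2 : (7 / 8) ^+ 2 <= e ^+ 2 by apply: sq_mono; lra.
  have e1 : e ^+ 2 <= 1 by rewrite -(expr1n _ 2); apply: sq_mono.
  have hk := key v; rewrite qE -/a -/e in hk.
  have as0 : a <= s0 by apply: le_trans hb _; rewrite ler_piMr.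
  have q1 : c * e ^+ 2 - a ^+ 2 <= c - a ^+ 2.
    by rewrite lerD2r ler_piMr.
  have q2 : c - a ^+ 2 <= eps * (2 * s0).
    have -> : c - a ^+ 2 = (s0 - a) * (s0 + a) by rewrite /c; ring.
    apply: ler_pM; [lra|lra|lra|lra].
  have q3 : eps * (2 * s0) = 2 * c * d by rewrite /eps /c; ring.
  have hq : 0 <= c * e ^+ 2 - a ^+ 2 by rewrite -qE.
  have hk2 : e ^+ 2 <= F * (c * (2 * c * d)).
    apply: le_trans hk _; apply: ler_wpM2l => //; apply: ler_wpM2l => //.
    by rewrite -q3; apply: le_trans q1 q2.
  have : F * (c * (2 * c * d)) = 2 * K * d by rewrite /K; ring.
  lra.
have E0 : ([set l | eigenvalue B l] !=set0)%classic by exists c.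
have ub : ubound [set l | eigenvalue B l]%classic c by move=> l; exact: eig_ub.
rewrite /sigma1 -/B.
have -> : sup [set l | eigenvalue B l]%classic = c.
  apply/le_anti/andP; split; first exact: ge_sup.
  apply: (sup_upper_bound (conj E0 (ex_intro _ c ub))); exact: eig_c.
by rewrite /c sqrtr_sqr ger0_norm.
Qed.


Lemma sigma1_specnorm' m k (A : 'M[R]_(m, k)) : (0 < k)%N -> sigma1 A = specnorm A.
Proof. by case: k A => [//|k] A _; exact: sigma1_specnorm. Qed.

Lemma enorm_orth' m k (U : 'M[R]_(m, k)) (v : 'cV[R]_k) :
  U^T *m U = 1%:M -> enorm (U *m v) = enorm v.
Proof.
move=> hU; apply: enorm_eqE; rewrite !enorm_sqE trmx_mul -mulmxA (mulmxA U^T).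
by rewrite hU mul1mx.
Qed.

End LA.

Section SVD.
Variable R : realType.

Lemma penrose_uniq m k (M : 'M[R]_(m, k)) P Q :
  penrose M P -> penrose M Q -> P = Q.
Proof.
move=> [p1 p2 p3 p4] [q1 q2 q3 q4].
have eMt : M^T = M^T *m (M *m Q) by rewrite -{1}q1 trmx_mul q3.
have ePt : P = P *m P^T *m M^T.
  have e : P = P *m (M *m P)^T by rewrite p3 mulmxA p2.
  by rewrite {1}e trmx_mul mulmxA.
have eP : P = P *m M *m Q.
  by rewrite {1}ePt eMt !mulmxA -ePt.
have eQt : Q = M^T *m Q^T *m Q.
  have e : Q = (Q *m M)^T *m Q by rewrite q4 q2.
  by rewrite {1}e trmx_mul.
have eMt2 : M^T = P *m M *m M^T by rewrite -{1}p1 -mulmxA trmx_mul p4.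
have eMQ : M^T *m Q^T = Q *m M by rewrite -trmx_mul q4.
have eQ : Q = P *m M *m Q.
  by rewrite {1}eQt {1}eMt2 -(mulmxA (P *m M)) eMQ -!mulmxA (mulmxA Q M Q) q2.
by rewrite eP [RHS]eQ.
Qed.


Lemma VtVn n N (h : (n <= N)%N) (V : 'M[R]_N) : V^T *m V = 1%:M ->
  V^T *m firstcols h V = \matrix_(k, j) (k == widen_ord h j)%:R.
Proof.
move=> hV; apply/matrixP => k j.
have := congr1 (fun M : 'M[R]_N => M k (widen_ord h j)) hV; rewrite /= !mxE => <-.
by apply: eq_bigr => l _; rewrite !mxE.
Qed.

Lemma Vn_orth n N (h : (n <= N)%N) (V : 'M[R]_N) : V^T *m V = 1%:M ->
  (firstcols h V)^T *m firstcols h V = 1%:M.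
Proof.
move=> hV; apply/matrixP => i j.
have := congr1 (fun M : 'M[R]_N => M (widen_ord h i) (widen_ord h j)) hV.
have ew : (widen_ord h i == widen_ord h j) = (i == j) by rewrite -val_eqE /= val_eqE.
rewrite /= !mxE ew => <-; by apply: eq_bigr => l _; rewrite !mxE.
Qed.

Lemma pinv_firstcols n N (h : (n <= N)%N) (V : 'M[R]_N) : V^T *m V = 1%:M ->
  Defs.pinv (firstcols h V)^T = firstcols h V.
Proof.
move=> hV; set Vn := firstcols h V.
have o := Vn_orth h hV; rewrite -/Vn in o.
have pV : penrose Vn^T Vn.
  split.
  - by rewrite o mul1mx.
  - by rewrite -mulmxA o mulmx1.
  - by rewrite o trmx1.
  - by rewrite trmx_mul trmxK.
apply/esym/(penrose_uniq pV); rewrite /Defs.pinv; exact: (xgetI _ (P := [set P | penrose Vn^T P]) pV).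
Qed.

Lemma proj_coord n N (h : (n <= N)%N) (V : 'M[R]_N) (x : 'cV[R]_N) k :
  V^T *m V = 1%:M ->
  (V^T *m (x - firstcols h V *m (firstcols h V)^T *m x)) k 0 =
  if (k < n)%N then 0 else (V^T *m x) k 0.
Proof.
move=> hV; rewrite mulmxBr mxBE -!mulmxA (mulmxA V^T) (VtVn h hV).
rewrite [X in _ - X]mxE.
case: ifP => kn.
  rewrite (bigD1 (Ordinal kn)) //= big1 ?addr0; last first.
    move=> j hj; rewrite mxE; case: eqP; last by rewrite mul0r.
    by move=> /(congr1 val) /= e; move: hj; rewrite -val_eqE /= -e eqxx.
  rewrite mxE (_ : k == widen_ord h (Ordinal kn)) ?mul1r; last by rewrite -val_eqE.
  apply/eqP; rewrite subr_eq0 !mxE; apply/eqP; apply: eq_bigr => l _; rewrite !mxE.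
  by congr (V _ _ * _); apply/val_inj.
rewrite big1 ?subr0 // => j _; rewrite mxE.
case: eqP => [e|]; last by rewrite mul0r.
by move: kn; rewrite e /= ltn_ord.
Qed.


Lemma svd_bounds N n (hnN : (n < N)%N) (W U V : 'M[R]_N) (s : 'I_N -> R)
  (hsvd : is_svd W U V s) (x : 'cV[R]_N) :
  let Vn := firstcols (ltnW hnN) V in
  let d := x - Vn *m Vn^T *m x in
  enorm (W *m d) <= s (Ordinal hnN) * enorm x /\ enorm d <= enorm x.
Proof.
move=> Vn d; case: hsvd => hU hV hW hs0 hsm.
have hVt : (V^T)^T *m V^T = 1%:M by rewrite trmxK; exact: mulmx1C.
have ex : enorm (V^T *m x) = enorm x by exact: enorm_orth.
have ed : enorm (V^T *m d) = enorm d by exact: enorm_orth.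
have dc := fun k => proj_coord (ltnW hnN) x k hV.
rewrite -/Vn -/d in dc.
have sn0 := hs0 (Ordinal hnN).
split.
  have -> : W *m d = U *m (diag_mx (\row_i s i) *m (V^T *m d)) by rewrite hW !mulmxA.
  rewrite enorm_orth //.
  apply: sq_le_le; first by rewrite mulr_ge0 // enorm_ge0.
  rewrite exprMn -ex !enorm_sq mulr_sumr; apply: ler_sum => k _.
  rewrite mul_diag_mx mxE dc mxE.
  case: ifP => kn; first by rewrite mulr0 expr0n /= mulr_ge0 // sqr_ge0.
  rewrite exprMn ler_wpM2r ?sqr_ge0 //; apply: sq_mono; first exact: hs0.
  by apply: hsm; rewrite /= leqNgt kn.
apply: sq_le_le; first exact: enorm_ge0.
rewrite -ex -ed !enorm_sq; apply: ler_sum => k _; rewrite dc.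
by case: ifP => _ //; rewrite expr0n sqr_ge0.
Qed.


Lemma VnT_contr n N (h : (n <= N)%N) (V : 'M[R]_N) (w : 'cV[R]_N) :
  V^T *m V = 1%:M -> enorm ((firstcols h V)^T *m w) <= enorm w.
Proof.
move=> hV.
have hVt : (V^T)^T *m V^T = 1%:M by rewrite trmxK; exact: mulmx1C.
rewrite -(enorm_orth w hVt); apply: sq_le_le; first exact: enorm_ge0.
rewrite !enorm_sq.
have e : forall j, ((firstcols h V)^T *m w) j 0 = (V^T *m w) (widen_ord h j) 0.
  by move=> j; rewrite !mxE; apply: eq_bigr => l _; rewrite !mxE.
rewrite (eq_bigr (fun j => (V^T *m w) (widen_ord h j) 0 ^+ 2)); last by move=> j _; rewrite e.
rewrite -(big_ord_narrow (F := fun k => (V^T *m w) k 0 ^+ 2) h).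
rewrite [X in _ <= X](bigID (fun k : 'I_N => (k < n)%N)) /= lerDl.
by apply: sumr_ge0 => k _; exact: sqr_ge0.
Qed.

End SVD.

Section Calc.
Local Open Scope classical_set_scope.
Variable R : realType.
Variable N : nat.
Variable g : 'cV[R]_N -> 'cV[R]_N -> 'cV[R]_N.
Let G := fun q : 'cV[R]_N * 'cV[R]_N => g q.1 q.2.

Lemma DGx (x y v : 'cV[R]_N) :
  'D_(v, 0) G (x, y) = 'D_v (fun z => g z y) x.
Proof.
rewrite /derive /=.
suff -> : (fun h : R => h^-1 *: (G (h *: (v, 0) + (x, y)) - G (x, y))) =
  (fun h => h^-1 *: (g (h *: v + x) y - g x y)) by [].
by apply: funext => h; rewrite /G /= scaler0 add0r.
Qed.

Lemma DGy (x y w : 'cV[R]_N) :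
  'D_(0, w) G (x, y) = 'D_w (fun z => g x z) y.
Proof.
rewrite /derive /=.
suff -> : (fun h : R => h^-1 *: (G (h *: (0, w) + (x, y)) - G (x, y))) =
  (fun h => h^-1 *: (g x (h *: w + y) - g x y)) by [].
by apply: funext => h; rewrite /G /= scaler0 add0r.
Qed.


Lemma col_sum_delta (v : 'cV[R]_N) : v = \sum_i v i 0 *: delta_mx i 0.
Proof.
apply/matrixP => k j; rewrite ord1 summxE (bigD1 k) //= big1 ?addr0.
  by rewrite !mxE !eqxx mulr1.
by move=> i hi; rewrite !mxE eq_sym (negbTE hi) mulr0.
Qed.

Lemma dGx (x y : 'cV[R]_N) v : differentiable G (x, y) ->
  'd G (x, y) (v, 0) = Jx g x y *m v.
Proof.
move=> dG.
pose L := fun a : 'cV[R]_N => 'd G (x, y) (a, 0).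
have Ladd : forall a b, L (a + b) = L a + L b.
  move=> a b; rewrite /L -linearD /=; congr ('d G (x, y) _).
  by rewrite -[in LHS](addr0 (0 : 'cV[R]_N)).

have L0 : L 0 = 0 by rewrite /L -[(0, 0)]/(0 : 'cV[R]_N * 'cV[R]_N) linear0.
have LZ : forall (k : R) a, L (k *: a) = k *: L a.
  move=> k a; rewrite /L -linearZ /=; congr ('d G (x, y) _).
  by rewrite -[in LHS](scaler0 _ k).
rewrite -/(L v) [in LHS](col_sum_delta v).
rewrite (big_morph L Ladd L0).
apply/matrixP => k j; rewrite ord1 summxE !mxE; apply: eq_bigr => i _.
rewrite LZ /L -deriveE // DGx !mxE mulrC //.
Qed.

Lemma dGy (x y : 'cV[R]_N) w : differentiable G (x, y) ->
  'd G (x, y) (0, w) = Jy g x y *m w.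
Proof.
move=> dG.
pose L := fun a : 'cV[R]_N => 'd G (x, y) (0, a).
have Ladd : forall a b, L (a + b) = L a + L b.
  move=> a b; rewrite /L -linearD /=; congr ('d G (x, y) _).
  by rewrite -[in LHS](addr0 (0 : 'cV[R]_N)).
have L0 : L 0 = 0 by rewrite /L -[(0, 0)]/(0 : 'cV[R]_N * 'cV[R]_N) linear0.
have LZ : forall (k : R) a, L (k *: a) = k *: L a.
  move=> k a; rewrite /L -linearZ /=; congr ('d G (x, y) _).
  by rewrite -[in LHS](scaler0 _ k).
rewrite -/(L w) [in LHS](col_sum_delta w).
rewrite (big_morph L Ladd L0).
apply/matrixP => k j; rewrite ord1 summxE !mxE; apply: eq_bigr => i _.
rewrite LZ /L -deriveE // DGy !mxE mulrC //.
Qed.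


Lemma mvt_main n (hG : forall q, differentiable G q) (W : 'M[R]_N)
  (M : 'M[R]_(n, N)) (z d : 'cV[R]_N) :
  exists2 c : R, 0 < c < 1 &
    enorm (M *m g (z + d) (W *m (z + d)) - M *m g z (W *m z)) <=
    enorm (M *m (Jx g (z + c *: d) (W *m (z + c *: d)) *m d
                 + Jy g (z + c *: d) (W *m (z + c *: d)) *m (W *m d))).
Proof.
pose p := fun t : R => (z + t *: d, W *m (z + t *: d)).
pose q := (d, W *m d).
pose K := fun t => G (p t).
have pshift : forall t h : R, p (h *: 1 + t) = h *: q + p t.
  move=> t h.
  have e1 : z + (h *: 1 + t) *: d = h *: d + (z + t *: d).
    by rewrite [h *: 1]mulr1 scalerDl addrCA.
  apply: (@eq_trans _ _ (h *: d + (z + t *: d), h *: (W *m d) + W *m (z + t *: d))); last by [].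
  by rewrite /p e1 mulmxDr scalemxAr.
have fe : forall t, (fun h : R => h^-1 *: ((K \o shift t) (h *: 1) - K t)) =
    (fun h => h^-1 *: ((G \o shift (p t)) (h *: q) - G (p t))).
  by move=> t; apply: funext => h; rewrite /= /K pshift.
have KD : forall t, 'D_1 K t = 'd G (p t) q.
  by move=> t; rewrite -deriveE // /derive fe.
have Kd : forall t, derivable K t 1.
  by move=> t; rewrite /derivable fe; exact: diff_derivable.
pose u := M *m (K 1 - K 0).
pose a := u^T *m M.
pose hk := fun k : 'I_N => (a 0 k) \*: (fun t : R => K t k 0).
pose psi := \sum_(k < N) hk k.
have psiE : forall t, psi t = (a *m K t) 0 0.
  by move=> t; rewrite /psi fct_sumE mxE; apply: eq_bigr => k _.
have hkd : forall t k, derivable (fun t => K t k 0) t 1.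
  by move=> t k; move/derivable_mxP: (Kd t); apply.
have hkd2 : forall t k, derivable (hk k) t 1.
  by move=> t k; apply: derivableZ.
have psid : forall t, derivable psi t 1 by move=> t; exact: derivable_sum.
have psiD : forall t, 'D_1 psi t = (a *m 'D_1 K t) 0 0.
  move=> t; rewrite derive_sum // mxE; apply: eq_bigr => k _.
  rewrite deriveZ // (derive_mx (Kd t)) !mxE //.
have cont : {within `[0, 1], continuous psi}.
  apply: continuous_subspaceT => t; apply: differentiable_continuous.
  by apply/derivable1_diffP.
have [c c01 hc] := MVT ltr01 (fun t _ => derivableP (psid t)) cont.
exists c; first by move: c01; rewrite in_itv.
set X := Jx g _ _ *m d + _.
have DK : 'D_1 K c = X.
  have qe : q = (d, 0) + (0, W *m d).
    apply: (@eq_trans _ _ (d + 0, 0 + W *m d)); last by [].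
    by rewrite addr0 add0r.
  by rewrite KD qe linearD /p dGx ?dGy.
have uE : M *m g (z + d) (W *m (z + d)) - M *m g z (W *m z) = u.
  by rewrite /u /K /p /G /= scale1r scale0r addr0 mulmxBr.
rewrite uE.
have hu : enorm u ^+ 2 <= enorm u * enorm (M *m X).
  have e1 : psi 1 - psi 0 = enorm u ^+ 2.
    by rewrite !psiE -mxBE -mulmxBr /a -mulmxA enorm_sqE.
  rewrite -e1 hc psiD DK subr0 mulr1 /a -mulmxA; exact: dot_le.
have [up|] := ltrP 0 (enorm u).
  by rewrite expr2 ler_pM2l in hu.
move=> ule; apply: le_trans ule _; exact: enorm_ge0.
Qed.

End Calc.

End Helpers.
Import Helpers.

Theorem theoremS59 (R : realType) (N n : nat) (hn1 : (1 <= n)%N) (hnN : (n < N)%N)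
  (W U V : 'M[R]_N) (s : 'I_N -> R) (hsvd : is_svd W U V s)
  (g : 'cV[R]_N -> 'cV[R]_N -> 'cV[R]_N) (hg : C1 g) (x : 'cV[R]_N) :
  let Vn := firstcols (ltnW hnN) V in
  let M := Vn^T in
  let sn1 := s (Ordinal hnN) in
  exists x' : 'cV[R]_N,
    (exists t : R, 0 <= t <= 1 /\ x' = (1 - t) *: x + t *: (Vn *m Vn^T *m x)) /\
    let y' := W *m x' in
    align_err g W M x <=
      (Num.sqrt n%:R)^-1 *
        (enorm (Vn^T *m Jx g x' y' *m (1%:M - Vn *m Vn^T) *m x)
         + sn1 * specnorm (Vn^T *m Jy g x' y') * enorm x) /\
    (x != 0 ->
      align_err g W M x / enorm x <=
        (Num.sqrt n%:R)^-1 * (sigma1 (Jx g x' y') + sn1 * sigma1 (Jy g x' y'))).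
Proof.
move=> Vn M sn1.
have hV : V^T *m V = 1%:M by case: hsvd.
have sn0 : 0 <= sn1 by case: hsvd => _ _ _ h _; exact: h.
set z := Vn *m Vn^T *m x; set d := x - z.
have [hsW hsd] := svd_bounds hnN hsvd x.
rewrite -/Vn -/z -/d in hsW hsd.
have hG : forall q, differentiable (fun q : 'cV[R]_N * 'cV[R]_N => g q.1 q.2) q.
  by case: hg.
have [c c01 hc] := mvt_main hG W M z d.
have zd : z + d = x by rewrite /d addrC subrK.
rewrite zd in hc.
move/andP: c01 => [c0 c1].
exists (z + c *: d); split.
  exists (1 - c); split; first by apply/andP; split; lra.
  rewrite /d /z; apply/matrixP => i j; rewrite !mxE; ring.
set x' := z + c *: d; move=> y'.
have pz : Defs.pinv M *m M *m x = z by rewrite /M /Vn pinv_firstcols.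
have sqn : 0 <= (Num.sqrt n%:R)^-1 :> R by rewrite invr_ge0 sqrtr_ge0.
have dE : Vn^T *m Jx g x' y' *m (1%:M - Vn *m Vn^T) *m x = M *m (Jx g x' y' *m d).
  by rewrite /d /z /M -!mulmxA mulmxBl mul1mx -mulmxA.
have B1 : align_err g W M x <=
    (Num.sqrt n%:R)^-1 * (enorm (M *m (Jx g x' y' *m d))
         + sn1 * specnorm (M *m Jy g x' y') * enorm x).
  rewrite /align_err pz; apply: ler_wpM2l => //.
  apply: le_trans hc _; rewrite mulmxDr.
  apply: le_trans (enormD _ _) _; rewrite lerD2l.
  rewrite mulmxA; apply: le_trans (specnorm_bound _ _) _.
  rewrite -mulrA mulrCA; apply: ler_wpM2l; first exact: specnorm_ge0.
  exact: hsW.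
split; first by rewrite dE.
move=> xnz.
have xp := enorm_gt0 xnz.
have hN : (0 < N)%N by apply: leq_ltn_trans (hnN).
rewrite ler_pdivrMr //; apply: le_trans B1 _.
rewrite -[X in _ <= X]mulrA; apply: ler_wpM2l => //.
rewrite mulrDl; apply: lerD.
  rewrite (sigma1_specnorm' _ hN).
  apply: le_trans (VnT_contr _ _ hV) _.
  apply: le_trans (specnorm_bound _ _) _.
  by apply: ler_wpM2l; [exact: specnorm_ge0|].
apply: ler_wpM2r; first exact: enorm_ge0.
apply: ler_wpM2l => //.
rewrite (sigma1_specnorm' _ hN); apply: specnorm_le; first exact: specnorm_ge0.
move=> v; rewrite -mulmxA; apply: le_trans (VnT_contr _ _ hV) _.
exact: specnorm_bound.
Qed.
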